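(* In the setting below, let $c'\in\{s,\dots,c\}$ be such that $\Phi_1,\dots,\Phi_{c'}$ are exactly those among $\Phi_1,\dots,\Phi_c$ all of whose coordinates have non-negative valuation, and set $\varphi_i=\ell_0(\Phi_i)\in\overline{\mathbb{K}}^N$ for $i\le c'$. Then for all $i\in\{1,\dots,s\}$ and $i'\in\{s+1,\dots,c'\}$ we have $\varphi_i\ne\varphi_{i'}$.
   Context: Setting: $\mathbb{K}$ a perfect field, $\mathbf{n}=(n_1,\dots,n_m)$, $N=\sum n_j$, variables $\mathbf{X}_j=(X_{j,1},\dots,X_{j,n_j})$; $\mathbf{f}=(f_1,\dots,f_N)\subset\mathbb{K}[\mathbf{X}]$ non-constant with multi-degrees at most $\mathbf{d}=(\underline{d}_1,\dots,\underline{d}_N)$, $\underline{d}_i=(d_{i,1},\dots,d_{i,m})$; $\mathbb{K}$ of characteristic zero or at least $\max_j\sum_i d_{i,j}$. Start system $\mathbf{g}$: $g_i=\prod_{j=1}^m\prod_{k=0}^{d_{i,j}-1}\kappa_{k+d_{1,j}+\cdots+d_{i-1,j}}(\mathbf{X}_j)$ with $\kappa_r(\mathbf{X}_j)=X_{j,1}+rX_{j,2}+\cdots+r^{n_j-1}X_{j,n_j}+r^{n_j}$; it has $c=\mathscr{C}_{\mathbf{n}}(\mathbf{d})$ nondegenerate roots, where $\mathscr{C}_{\mathbf{n}}(\mathbf{d})$ is the sum of the coefficients of $\prod_i(d_{i,1}\vartheta_1+\cdots+d_{i,m}\vartheta_m)\bmod\langle\vartheta_j^{n_j+1}\rangle_j$.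 Let $\tau=t-1$ and $\mathbf{homot}=t\mathbf{f}+(1-t)\mathbf{g}$ written in $\tau$; $D$ is its Jacobian determinant w.r.t. $\mathbf{X}$, and $\mathfrak{Z}$ is the zero-set, over an algebraic closure of $\overline{\mathbb{K}}((\tau))$, of $\langle\mathbf{homot}\rangle:D^\infty$; it is assumed (as ensured by choosing a linear form separating the roots of $\mathbf{g}$) that $\mathfrak{Z}$ has exactly $c$ points. Let $\mathbb{L}$ be the field of generalized power series $\sum_{i\in I}a_i\tau^i$, $a_i\in\overline{\mathbb{K}}$, with $I\subset\mathbb{Q}$ well-ordered; it contains an algebraic closure of $\overline{\mathbb{K}}((\tau))$. The valuation $\nu(F)$ of nonzero $F\in\mathbb{L}$ is the least exponent with nonzero coefficient; for $\nu(F)\ge0$, $\ell_0(F)$ is the coefficient of $\tau^0$ (extended coordinatewise to vectors). Let $Z(\mathbf{f})=\{\varphi_1,\dots,\varphi_s\}$ be the common zeros of $\mathbf{f}$ in $\overline{\mathbb{K}}^N$ where the Jacobian of $\mathbf{f}$ is invertible, and for $i\le s$ let $\Phi_i\in\overline{\mathbb{K}}[[\tau]]^N$ be the unique power series vector cancelling $\mathbf{homot}$ with $\ell_0(\Phi_i)=\varphi_i$. The points of $\mathfrak{Z}$ are written $\Phi_1,\dots,\Phi_c\in\mathbb{L}^N$, the first $s$ being these power series, and indexed so that the points with all coordinates of non-negative valuation come first. *)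

(* Defs.v *)
From HB Require Import structures.
From mathcomp Require Import all_boot all_order all_algebra all_field.
From mathcomp Require Import mpoly.

Set Implicit Arguments.
Unset Strict Implicit.
Unset Printing Implicit Defensive.

Import Order.TTheory GRing.Theory Num.Theory.
Local Open Scope ring_scope.

Definition perfect_field (K : fieldType) : Prop :=
  forall p : nat, p \in [pchar K] -> forall x : K, exists y : K, y ^+ p = x.

Definition is_algebraic_closure (K : fieldType) (F : closedFieldType)
  (iota : {rmorphism K -> F}) : Prop :=
  forall x : F, exists2 p : {poly K}, p != 0 & root (map_poly iota p) x.

(* Variable blocks: N = n_1 + ... + n_m variables, the block X_j       *)
(* consisting of the variables numbered offs n j + k, k < n j.         *)

Definition Ntot (m : nat) (n : 'I_m -> nat) : nat := (\sum_(j < m) n j)%N.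

Definition offs (m : nat) (n : 'I_m -> nat) (j : 'I_m) : nat :=
  (\sum_(j' < m | (j' < j)%N) n j')%N.

(* the variable X_{j,k} (k numbered from 0); the index is always in     *)
(* range, the default 0 is never used.                                  *)
Definition Xv (R : nzRingType) (m : nat) (n : 'I_m -> nat) (j : 'I_m) (k : nat)
  : {mpoly R[Ntot n]} :=
  oapp (fun i : 'I_(Ntot n) => 'X_i) 0 (insub (offs n j + k)%N).
Arguments Xv R {m} n j k.

Definition bdeg (m : nat) (n : 'I_m -> nat) (j : 'I_m)
  (mo : 'X_{1..Ntot n}) : nat :=
  (\sum_(k < n j) oapp (fun i : 'I_(Ntot n) => mo i) 0%N
                      (insub (offs n j + k)%N))%N.
Arguments bdeg {m} n j mo.

Definition multideg_le (R : nzRingType) (m : nat) (n : 'I_m -> nat)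
  (p : {mpoly R[Ntot n]}) (dd : 'I_m -> nat) : Prop :=
  forall mo, mo \in msupp p -> forall j, (bdeg n j mo <= dd j)%N.
Arguments multideg_le {R m} n p dd.

Definition nonconstant (R : nzRingType) (N : nat) (p : {mpoly R[N]}) : Prop :=
  exists2 mo, mo \in msupp p & mo != 0%MM.

Definition jacdet (R : comRingType) (N : nat) (h : 'I_N -> {mpoly R[N]})
  : {mpoly R[N]} :=
  \det (\matrix_(i < N, k < N) mderiv k (h i)).

(* The multihomogeneous Bezout number C_n(d): sum of the coefficients  *)
(* of prod_i (d_{i,1} th_1 + ... + d_{i,m} th_m) mod <th_j^(n_j+1)>.   *)

Definition bezout_poly (m : nat) (n : 'I_m -> nat) (d : 'I_(Ntot n) -> 'I_m -> nat)
  : {mpoly int[m]} :=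
  \prod_(i < Ntot n) \sum_(j < m) (d i j)%:R *: 'X_j.

Definition Cnd (m : nat) (n : 'I_m -> nat) (d : 'I_(Ntot n) -> 'I_m -> nat) : nat :=
  (\sum_(mo <- msupp (bezout_poly d) | [forall j, (mo j <= n j)%N])
     `|(bezout_poly d)@_mo|)%N.

Definition kappa (K : fieldType) (m : nat) (n : 'I_m -> nat) (r : nat) (j : 'I_m)
  : {mpoly K[Ntot n]} :=
  \sum_(l < n j) ((r%:R : K) ^+ l) *: Xv K n j l + ((r%:R : K) ^+ n j)%:MP.

Definition startsys (K : fieldType) (m : nat) (n : 'I_m -> nat)
  (d : 'I_(Ntot n) -> 'I_m -> nat) (i : 'I_(Ntot n)) : {mpoly K[Ntot n]} :=
  \prod_(j < m) \prod_(k < d i j)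
     kappa K n (k + \sum_(i' < Ntot n | (i' < i)%N) d i' j)%N j.
Arguments startsys K {m} n d i.

(* Abstract description of the field L of generalized power series     *)
(* sum_{i in I} a_i tau^i (a_i in Kbar = F, I subset Q well ordered):  *)
(* emb : F -> L (constants), the element tau, the valuation nu (only   *)
(* meaningful on nonzero elements; nu 0 = +oo by convention) and the   *)
(* map l0 (coefficient of tau^0, defined on elements of valuation      *)

Definition vnonneg (L : fieldType) (nu : L -> rat) (x : L) : Prop :=
  x = 0 \/ 0 <= nu x.

Record hahn_like (F L : fieldType) (emb : {rmorphism F -> L}) (tau : L)
  (nu : L -> rat) (l0 : L -> F) : Prop := HahnLike {
  nuM : forall x y, x != 0 -> y != 0 -> nu (x * y) = nu x + nu y;
  nuD : forall x y, x != 0 -> y != 0 -> x + y != 0 ->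
          Num.min (nu x) (nu y) <= nu (x + y);
  nu_emb : forall c, c != 0 -> nu (emb c) = 0;
  tau_neq0 : tau != 0;
  nu_tau : nu tau = 1;
  nu_surj : forall q : rat, exists2 x, x != 0 & nu x = q;
  l0_emb : forall c, l0 (emb c) = c;
  l0D : forall x y, vnonneg nu x -> vnonneg nu y -> l0 (x + y) = l0 x + l0 y;
  l0M : forall x y, vnonneg nu x -> vnonneg nu y -> l0 (x * y) = l0 x * l0 y;
  l0_eq0 : forall x, vnonneg nu x -> (l0 x = 0 <-> (x = 0 \/ 0 < nu x))
}.

Definition is_power_series (F L : fieldType) (emb : {rmorphism F -> L}) (tau : L)
  (nu : L -> rat) (a : nat -> F) (x : L) : Prop :=
  forall K : nat,
    let r := x - \sum_(k < K) emb (a k) * tau ^+ k in r = 0 \/ K%:Q <= nu r.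

Section Homotopy.
Variables (K : fieldType) (F : closedFieldType) (iota : {rmorphism K -> F}).
Variables (L : closedFieldType) (emb : {rmorphism F -> L}) (tau : L).
Variables (N : nat) (f g : 'I_N -> {mpoly K[N]}).

(* homot = t f + (1 - t) g with t = tau + 1, i.e. (tau+1) f - tau g,   *)
(* tau being specialized to the element tau of L.                      *)
Definition homot (i : 'I_N) : {mpoly L[N]} :=
  (tau + 1) *: map_mpoly (emb \o iota) (f i)
  - tau *: map_mpoly (emb \o iota) (g i).

Definition homotD : {mpoly L[N]} := jacdet homot.

Definition in_saturation (p : {mpoly L[N]}) : Prop :=
  exists (k : nat) (a : 'I_N -> {mpoly L[N]}),
    homotD ^+ k * p = \sum_(i < N) a i * homot i.

Definition in_Zset (x : 'I_N -> L) : Prop :=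
  forall p, in_saturation p -> p.@[x] = 0.

End Homotopy.

(* Main.v *)
Require Import Defs.
From HB Require Import structures.
From mathcomp Require Import all_boot all_order all_algebra all_field.
From mathcomp Require Import mpoly.
From mathcomp Require Import fingroup perm.
From mathcomp Require Import ring.
From Stdlib Require Import FunctionalExtensionality.
Import Order.TTheory GRing.Theory Num.Theory.
Local Open Scope ring_scope.
Set Implicit Arguments. Unset Strict Implicit.

Section Val.
Variables (F L : fieldType) (emb : {rmorphism F -> L}) (tau : L)
  (nu : L -> rat) (l0 : L -> F) (HL : hahn_like emb tau nu l0).
Local Notation V := (vnonneg nu).

Lemma V0 : V 0. Proof. by left. Qed.
Lemma Vemb c : V (emb c).
Proof.
have [->|c0] := eqVneq c 0; first by rewrite rmorph0; left.
by right; rewrite (nu_emb HL c0).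
Qed.
Lemma VD x y : V x -> V y -> V (x + y).
Proof.
case=> [->|hx]; first by rewrite add0r.
case=> [->|hy]; first by rewrite addr0; right.
have [->|xy] := eqVneq (x + y) 0; first by left.
have [x0|x0] := eqVneq x 0; first by rewrite x0 add0r; right.
have [y0|y0] := eqVneq y 0; first by rewrite y0 addr0; right.
right; apply: le_trans (nuD HL x0 y0 xy).
by rewrite le_min hx hy.
Qed.
Lemma VM x y : V x -> V y -> V (x * y).
Proof.
case=> [->|hx]; first by rewrite mul0r; left.
case=> [->|hy]; first by rewrite mulr0; left.
have [x0|x0] := eqVneq x 0; first by rewrite x0 mul0r; left.
have [y0|y0] := eqVneq y 0; first by rewrite y0 mulr0; left.
by right; rewrite (nuM HL x0 y0) addr_ge0.
Qed.
Lemma l0e c : l0 (emb c) = c. Proof. exact: (l0_emb HL c). Qed.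
Lemma VN x : V x -> V (- x).
Proof. by move=> hx; rewrite -mulN1r -(rmorphN1 emb); apply: VM (@Vemb _) hx. Qed.
Lemma l0N x : V x -> l0 (- x) = - l0 x.
Proof.
move=> hx; rewrite -mulN1r -(rmorphN1 emb) (l0M HL (@Vemb _) hx) l0e.
by rewrite mulN1r.
Qed.
Lemma VB x y : V x -> V y -> V (x - y).
Proof. by move=> hx hy; apply: VD hx (VN hy). Qed.
Lemma l0B x y : V x -> V y -> l0 (x - y) = l0 x - l0 y.
Proof. by move=> hx hy; rewrite (l0D HL hx (VN hy)) l0N. Qed.

Lemma Vsum (I : Type) (r : seq I) (P : pred I) (G : I -> L) :
  (forall i, P i -> V (G i)) ->
  V (\sum_(i <- r | P i) G i) /\ l0 (\sum_(i <- r | P i) G i) = \sum_(i <- r | P i) l0 (G i).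
Proof.
move=> hG; elim: r => [|a r [ih1 ih2]]; first by rewrite !big_nil -(rmorph0 emb) l0e; split=> //; apply: (@Vemb _).
rewrite !big_cons; case: ifP => Pa //.
by split; [apply: VD (hG _ Pa) ih1 | rewrite (l0D HL (hG _ Pa) ih1) ih2].
Qed.
Lemma Vprod (I : Type) (r : seq I) (P : pred I) (G : I -> L) :
  (forall i, P i -> V (G i)) ->
  V (\prod_(i <- r | P i) G i) /\ l0 (\prod_(i <- r | P i) G i) = \prod_(i <- r | P i) l0 (G i).
Proof.
move=> hG; elim: r => [|a r [ih1 ih2]]; first by rewrite !big_nil -(rmorph1 emb) l0e; split=> //; apply: (@Vemb _).
rewrite !big_cons; case: ifP => Pa //.
by split; [apply: VM (hG _ Pa) ih1 | rewrite (l0M HL (hG _ Pa) ih1) ih2].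
Qed.

Lemma Vdet (N : nat) (M : 'M[L]_N) : (forall i j, V (M i j)) ->
  V (\det M) /\ l0 (\det M) = \det (map_mx l0 M).
Proof.
move=> hM; rewrite /determinant.
have hs : forall s : 'S_N, V ((-1) ^+ s * \prod_i M i (s i)) /\
   l0 ((-1) ^+ s * \prod_i M i (s i)) = (-1) ^+ s * \prod_i (map_mx l0 M) i (s i).
  move=> s; have [p1 p2] := @Vprod _ (index_enum _) (fun _ => true) (fun i => M i (s i)) (fun i _ => hM _ _).
  rewrite -(rmorph_sign emb) (l0M HL (@Vemb _) p1) l0e p2; split; first exact: VM (@Vemb _) p1.
  by congr (_ * _); apply: eq_bigr => i _; rewrite mxE.
have [q1 q2] := @Vsum _ (index_enum _) (fun _ => true) _ (fun s _ => (hs s).1).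
split=> //; rewrite q2; apply: eq_bigr => s _; exact: (hs s).2.
Qed.
End Val.

Lemma mpoly_ring_ind (R : comNzRingType) (N : nat) (P : {mpoly R[N]} -> Prop) :
  (forall c, P c%:MP) -> (forall i, P 'X_i) ->
  (forall p q, P p -> P q -> P (p + q)) -> (forall p q, P p -> P q -> P (p * q)) ->
  forall p, P p.
Proof.
move=> hC hX hD hM p; elim/mpolyind: p.
  by rewrite -mpolyC0.
move=> c m p _ _ hp; apply: (hD) => //; rewrite -mul_mpolyC; apply: (hM); first exact: hC.
rewrite mpolyXE_id; apply: (big_ind P); first by rewrite -mpolyC1.
  exact: (hM).
move=> i _; elim: (m i) => [|k ih]; first by rewrite expr0 -mpolyC1.
by rewrite exprS; apply: (hM).
Qed.

Section Poly.
Variables (F L : fieldType) (emb : {rmorphism F -> L}) (tau : L)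
  (nu : L -> rat) (l0 : L -> F) (HL : hahn_like emb tau nu l0) (N : nat).
Local Notation V := (vnonneg nu).

Lemma evalV (x : 'I_N -> L) : (forall k, V (x k)) -> forall P : {mpoly F[N]},
  V ((map_mpoly emb P).@[x]) /\ l0 ((map_mpoly emb P).@[x]) = P.@[fun k => l0 (x k)].
Proof.
move=> hx; elim/mpoly_ring_ind.
- move=> c; rewrite map_mpolyC !mevalC; split; [exact: (Vemb HL) | exact: (l0e HL)].
- move=> i; rewrite map_mpolyX !mevalXU; split=> //.
- move=> p q [p1 p2] [q1 q2]; rewrite rmorphD !mevalD; split; first exact: (VD HL).
  by rewrite (l0D HL p1 q1) p2 q2.
- move=> p q [p1 p2] [q1 q2]; rewrite rmorphM !mevalM; split; first exact: (VM HL).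
  by rewrite (l0M HL p1 q1) p2 q2.
Qed.

Lemma derX (k i : 'I_N) (v : 'I_N -> F) : (mderiv k ('X_i : {mpoly F[N]})).@[v] = (k == i)%:R.
Proof.
rewrite mderivX mevalZ mnm1E; case: (eqVneq k i) => [->|ne].
  have -> : (U_(i) - U_(i))%MM = 0%MM by apply/mnmP => j; rewrite mnmBE subnn mnmE.
  by rewrite mpolyX0 -mpolyC1 mevalC mulr1.
by rewrite -[false%:R]/(0%:R) mulr0n mul0r.
Qed.

Lemma diffV (x y : 'I_N -> L) : (forall k, V (x k)) -> (forall k, V (y k)) ->
  (fun k => l0 (y k)) = (fun k => l0 (x k)) -> forall P : {mpoly F[N]},
  exists q : 'I_N -> L,
   (map_mpoly emb P).@[y] - (map_mpoly emb P).@[x] = \sum_k (y k - x k) * q k /\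
   forall k, V (q k) /\ l0 (q k) = (mderiv k P).@[fun k => l0 (x k)].
Proof.
move=> hx hy hxy; elim/mpoly_ring_ind.
- move=> c; exists (fun _ => 0); rewrite map_mpolyC !mevalC subrr big1; last by move=> k _; rewrite mulr0.
  split=> // k; rewrite mderivC raddf0 -(rmorph0 emb) (l0e HL); split=> //.
  exact: (Vemb HL).
- move=> i; exists (fun k : 'I_N => ((k == i)%:R : L)); rewrite map_mpolyX !mevalXU; split.
    rewrite (bigD1 i) //= eqxx mulr1 big1 ?addr0 // => k /negbTE ->.
    by rewrite mulr0.
  move=> k; rewrite derX -(rmorph_nat emb) (l0e HL); split=> //.
  exact: (Vemb HL).
- move=> p q [qp [e1 h1]] [qq [e2 h2]]; exists (fun k => qp k + qq k); split.
    rewrite rmorphD !mevalD.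
    have -> : (map_mpoly emb p).@[y] + (map_mpoly emb q).@[y] -
      ((map_mpoly emb p).@[x] + (map_mpoly emb q).@[x]) =
      ((map_mpoly emb p).@[y] - (map_mpoly emb p).@[x]) +
      ((map_mpoly emb q).@[y] - (map_mpoly emb q).@[x]) by ring.
    by rewrite e1 e2 -big_split /=; apply: eq_bigr => k _; rewrite mulrDr.
  move=> k; have [a1 a2] := h1 k; have [b1 b2] := h2 k.
  split; first exact: (VD HL).
  by rewrite (l0D HL a1 b1) a2 b2 mderivD mevalD.
- move=> p q [qp [e1 h1]] [qq [e2 h2]].
  have [py1 py2] := evalV hy p; have [qx1 qx2] := evalV hx q.
  exists (fun k => (map_mpoly emb p).@[y] * qq k + (map_mpoly emb q).@[x] * qp k); split.
    rewrite rmorphM !mevalM.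
    have -> : (map_mpoly emb p).@[y] * (map_mpoly emb q).@[y] -
      (map_mpoly emb p).@[x] * (map_mpoly emb q).@[x] =
      (map_mpoly emb p).@[y] * ((map_mpoly emb q).@[y] - (map_mpoly emb q).@[x]) +
      (map_mpoly emb q).@[x] * ((map_mpoly emb p).@[y] - (map_mpoly emb p).@[x]) by ring.
    rewrite e1 e2 !mulr_sumr -big_split /=; apply: eq_bigr => k _; ring.
  move=> k; have [a1 a2] := h1 k; have [b1 b2] := h2 k.
  split; first by apply: (VD HL); apply: (VM HL).
  rewrite (l0D HL (VM HL py1 b1) (VM HL qx1 a1)) (l0M HL py1 b1) (l0M HL qx1 a1).
  rewrite py2 qx2 a2 b2 hxy mderivM mevalD !mevalM; ring.
Qed.
End Poly.

Theorem lemma3p7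
  (* the perfect field K, its algebraic closure Kbar = F *)
  (K : fieldType) (F : closedFieldType) (iota : {rmorphism K -> F})
  (HKperf : perfect_field K) (HF : is_algebraic_closure iota)
  (* block structure n = (n_1,...,n_m), N = n_1 + ... + n_m *)
  (m : nat) (n : 'I_m -> nat)
  (* the system f and the multidegree bounds d *)
  (d : 'I_(Ntot n) -> 'I_m -> nat) (f : 'I_(Ntot n) -> {mpoly K[Ntot n]})
  (Hfnc : forall i, nonconstant (f i))
  (Hfdeg : forall i, multideg_le n (f i) (d i))
  (Hchar : [pchar K] =i pred0 \/
           exists2 p, p \in [pchar K] &
             (\max_(j < m) \sum_(i < Ntot n) d i j <= p)%N)
  (* the field L of generalized power series *)
  (L : closedFieldType) (emb : {rmorphism F -> L}) (tau : L)
  (nu : L -> rat) (l0 : L -> F) (HL : hahn_like emb tau nu l0)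
  (* the points Phi_1, ..., Phi_c of Z, c = C_n(d) *)
  (Phi : 'I_(Cnd d) -> ('I_(Ntot n) -> L))
  (HPhi_inj : injective Phi)
  (HZ : forall x, in_Zset iota emb tau f (startsys K n d) x <-> exists i, x = Phi i)
  (* the regular zeros phi_1, ..., phi_s of f *)
  (s : nat) (phi : 'I_s -> ('I_(Ntot n) -> F)) (Hphi_inj : injective phi)
  (Hphi : forall x : 'I_(Ntot n) -> F,
     ((forall i, (map_mpoly iota (f i)).@[x] = 0) /\
      (jacdet (fun i => map_mpoly iota (f i))).@[x] != 0)
     <-> exists k, x = phi k)
  (Hsc : (s <= Cnd d)%N)
  (* Phi_1, ..., Phi_s are the power series with l0(Phi_i) = phi_i *)
  (HPhi_ps : forall i : 'I_s, exists2 a : 'I_(Ntot n) -> nat -> F,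
     (forall j, a j 0%N = phi i j) &
     (forall j, is_power_series emb tau nu (a j) (Phi (widen_ord Hsc i) j)))
  (* c' : Phi_1, ..., Phi_c' are exactly those with all coordinates of
     nonnegative valuation *)
  (c' : nat) (Hc'1 : (s <= c')%N) (Hc'2 : (c' <= Cnd d)%N)
  (Hc' : forall i : 'I_(Cnd d),
     (i < c')%N <-> (forall j, vnonneg nu (Phi i j))) :
  forall i i' : 'I_(Cnd d), (i < s)%N -> (s <= i')%N -> (i' < c')%N ->
    (fun j => l0 (Phi i j)) <> (fun j => l0 (Phi i' j)).
Proof.
move=> i i' hi hsi hi' Heq.
pose Pf j := map_mpoly iota (f j).
pose Pg j := map_mpoly iota (startsys K n d j).
have Vx : forall j, vnonneg nu (Phi i j) by apply/(Hc' i); exact: leq_trans hi Hc'1.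
have Vy : forall j, vnonneg nu (Phi i' j) by apply/(Hc' i').
have hxy : (fun k => l0 (Phi i' k)) = (fun k => l0 (Phi i k)) by rewrite Heq.
have [qF hF] := fin_all_exists (fun j => diffV HL Vx Vy hxy (Pf j)).
have [qG hG] := fin_all_exists (fun j => diffV HL Vx Vy hxy (Pg j)).
have mapc : forall p : {mpoly K[Ntot n]}, map_mpoly (emb \o iota) p = map_mpoly emb (map_mpoly iota p).
  by move=> p; apply/mpolyP => mo; rewrite !mcoeff_map_mpoly.
have hev : forall z j, (homot iota emb tau f (startsys K n d) j).@[z] =
   (tau + 1) * (map_mpoly emb (Pf j)).@[z] - tau * (map_mpoly emb (Pg j)).@[z].
  by move=> z j; rewrite /homot mevalB !mevalZ !mapc.
have hzero : forall k j, (homot iota emb tau f (startsys K n d) j).@[Phi k] = 0.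
  move=> k j; have /HZ hz : exists k0, Phi k = Phi k0 by exists k.
  apply: hz; exists 0%N, (fun l => (l == j)%:R).
  rewrite expr0 mul1r (bigD1 j) //= eqxx mul1r big1 ?addr0 // => l /negbTE ->.
  by rewrite mul0r.
have Vtau : vnonneg nu tau by right; rewrite (nu_tau HL).
have l0tau : l0 tau = 0.
  by apply/(l0_eq0 HL Vtau); right; rewrite (nu_tau HL).
have V1 : vnonneg nu 1 by rewrite -(rmorph1 emb); apply: (Vemb HL).
have Vt1 : vnonneg nu (tau + 1) by apply: (VD HL).
have l0t1 : l0 (tau + 1) = 1 by rewrite (l0D HL Vtau V1) l0tau add0r -(rmorph1 emb) (l0e HL).
pose M := \matrix_(j, k) ((tau + 1) * qF j k - tau * qG j k).
pose Delta := \col_k (Phi i' k - Phi i k).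
have hMD : M *m Delta = 0.
  apply/matrixP => j c; rewrite !mxE.
  have [e1 _] := hF j; have [e2 _] := hG j.
  transitivity ((tau + 1) * ((map_mpoly emb (Pf j)).@[Phi i'] - (map_mpoly emb (Pf j)).@[Phi i])
     - tau * ((map_mpoly emb (Pg j)).@[Phi i'] - (map_mpoly emb (Pg j)).@[Phi i])).
    rewrite e1 e2 !mulr_sumr -sumrB; apply: eq_bigr => k _; rewrite !mxE; ring.
  have := hzero i' j; have := hzero i j; rewrite !hev => z1 z2.
  transitivity (((tau + 1) * (map_mpoly emb (Pf j)).@[Phi i'] - tau * (map_mpoly emb (Pg j)).@[Phi i'])
     - ((tau + 1) * (map_mpoly emb (Pf j)).@[Phi i] - tau * (map_mpoly emb (Pg j)).@[Phi i])).
    ring.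
  by rewrite z1 z2 subrr.
have hMe : forall j k, vnonneg nu (M j k) /\
    l0 (M j k) = (mderiv k (Pf j)).@[fun k => l0 (Phi i k)].
  move=> j k; rewrite mxE; have [a1 a2] := (hF j).2 k; have [b1 b2] := (hG j).2 k.
  split; first by apply: (VB HL); apply: (VM HL).
  rewrite (l0B HL (VM HL Vt1 a1) (VM HL Vtau b1)) (l0M HL Vt1 a1) (l0M HL Vtau b1).
  by rewrite l0t1 l0tau a2 mul1r mul0r subr0.
have [dV dl0] := Vdet HL (fun j k => (hMe j k).1).
have i0lt : (i < s)%N := hi.
pose i0 : 'I_s := Ordinal i0lt.
have wi : widen_ord Hsc i0 = i by apply: val_inj.
have hl0x : (fun k => l0 (Phi i k)) = phi i0.
  have [a ha0 hps] := HPhi_ps i0; rewrite wi in hps.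
  apply: functional_extensionality => j.
  have := hps j 1%N; rewrite /= big_ord_recl big_ord0 addr0 expr0 mulr1.
  set r := Phi i j - emb (a j 0%N) => hr.
  have Vr : vnonneg nu r by case: hr => [->|hr]; [left|right; apply: le_trans hr].
  have l0r : l0 r = 0 by apply/(l0_eq0 HL Vr); case: hr => [->|hr]; [left|right; apply: lt_le_trans hr].
  have -> : Phi i j = r + emb (a j 0%N) by rewrite /r subrK.
  by rewrite (l0D HL Vr (Vemb HL _)) l0r add0r (l0e HL) ha0.
have hjac : (jacdet Pf).@[phi i0] != 0.
  by have [_ ->] := (Hphi (phi i0)).2 (ex_intro _ i0 erefl).
have detM : \det M != 0.
  apply: contraNneq hjac => d0.
  have -> : (jacdet Pf).@[phi i0] = \det (map_mx l0 M).
    rewrite /jacdet -det_map_mx; congr (\det _); apply/matrixP => j k.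
    by rewrite [RHS]mxE (hMe j k).2 !mxE hl0x.
  by rewrite -dl0 d0 -(rmorph0 emb) (l0e HL).
have Mu : M \in unitmx by rewrite unitmxE unitfE.
have D0 : Delta = 0 by rewrite -(mulKmx Mu Delta) hMD mulmx0.
have : Phi i' = Phi i.
  apply: functional_extensionality => k.
  have := congr1 (fun A : 'cV_(Ntot n) => A k ord0) D0; rewrite !mxE.
  by move/eqP; rewrite subr_eq0 => /eqP.
move/HPhi_inj => eii.
by move: hsi; rewrite eii leqNgt hi.
Qed.
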